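(* Let $\mathbf a=(a_0,\dots,a_n)$ be integers $a_i>1$. For sufficiently small $\epsilon>0$ there is a $C(L)$-equivariant Liouville homotopy between $(X^1_\epsilon,-d^{\mathbb C}\phi_0)$ and $(X^1_\epsilon,\lambda_{\mathbf a})$.
   Context: $f(\mathbf z)=\sum_k z_k^{a_k}$ on $\mathbb{C}^{n+1}$, $V_{\mathbf a}(\epsilon)=f^{-1}(\epsilon)$, $X^1_\epsilon=V_{\mathbf a}(\epsilon)\cap B(1)$ with $B(1)$ the closed unit ball. For $t\in[0,1]$ let $\phi_t(\mathbf z)=\frac18\sum_j c_j(t)|z_j|^2$ with $c_j(t)=1+t(a_j-1)$, and $d^{\mathbb C}\phi=d\phi\circ i$; thus $-d^{\mathbb C}\phi_1=\lambda_{\mathbf a}=\frac{i}{8}\sum_k a_k(z_kd\bar z_k-\bar z_kdz_k)$ (forms restricted to $X^1_\epsilon$). With $L=\mathrm{lcm}(a_j)$, $b_j=L/a_j$, $\zeta=e^{2\pi i/L}$, the group $C(L)=\langle\zeta\rangle$ acts by $z_j\mapsto\zeta^{b_j}z_j$. A $C(L)$-equivariant Liouville homotopy is a smooth family of $C(L)$-invariant 1-forms $\lambda_s$ on $X^1_\epsilon$, each making $X^1_\epsilon$ a Liouville domain, joining the two given forms. *)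

(* Defs.v *)
From HB Require Import structures.
From mathcomp Require Import all_boot all_order all_algebra.
From mathcomp Require Import all_classical all_reals all_analysis.
From mathcomp Require Import complex.
Set Implicit Arguments. Unset Strict Implicit. Unset Printing Implicit Defensive.
Import Order.TTheory GRing.Theory Num.Theory.
Import numFieldNormedType.Exports.
Local Open Scope ring_scope.

Section Defs.
Variable R : realType.

Fixpoint iterD (V : normedModType R) (vs : seq V) (g : V -> R) : V -> R :=
  if vs is v :: vs' then 'D_v (iterD vs' g) else g.

Definition smooth (V : normedModType R) (g : V -> R) : Prop :=
  forall (vs : seq V) (x : V), differentiable (iterD vs g) x.

(* a point p = (x, y) represents z with z_k = x_k + i y_k *)
Definition Cn (n : nat) := ('rV[R]_n.+1 * 'rV[R]_n.+1)%type.

Definition zc (n : nat) (p : Cn n) (k : 'I_n.+1) : R[i] :=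
  Complex (p.1 ord0 k) (p.2 ord0 k).

Definition mul_i (n : nat) (v : Cn n) : Cn n := (- v.2, v.1).

Definition rdot (n : nat) (p q : Cn n) : R :=
  \sum_(k < n.+1) (p.1 ord0 k * q.1 ord0 k + p.2 ord0 k * q.2 ord0 k).

Definition brieskorn (n : nat) (a : 'I_n.+1 -> nat) (p : Cn n) : R[i] :=
  \sum_(k < n.+1) (zc p k) ^+ (a k).

Definition Xeps (n : nat) (a : 'I_n.+1 -> nat) (eps : R) (p : Cn n) : Prop :=
  brieskorn a p = Complex eps 0 /\ rdot p p <= 1.

Definition dXeps (n : nat) (a : 'I_n.+1 -> nat) (eps : R) (p : Cn n) : Prop :=
  brieskorn a p = Complex eps 0 /\ rdot p p = 1.

(* tangent space of V_a(eps) at p: kernel of the complex differential of f *)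
Definition tangent (n : nat) (a : 'I_n.+1 -> nat) (p v : Cn n) : Prop :=
  \sum_(k < n.+1) (a k)%:R * (zc p k) ^+ (a k).-1 * zc v k = 0.

(* omega p v = value of the form at the point p on the vector v *)
Definition oneform (n : nat) := Cn n -> Cn n -> R.

(* exterior derivative of a 1-form, evaluated on constant vector fields u, w *)
Definition dform (n : nat) (om : oneform n) (p u w : Cn n) : R :=
  'D_u (fun q => om q w) p - 'D_w (fun q => om q u) p.

(* (X^1_eps, lambda) is a Liouville domain: X^1_eps is a manifold with
   boundary (the sphere is transverse to V_a(eps) along the boundary),
   d lambda is symplectic on X^1_eps, and the Liouville vector field Y
   (iota_Y d lambda = lambda) points outward along the boundary. *)
Definition liouville_domain (n : nat) (a : 'I_n.+1 -> nat) (eps : R)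
    (lam : oneform n) : Prop :=
  (forall p, dXeps a eps p -> exists v, tangent a p v /\ rdot p v != 0) /\
  (forall p, Xeps a eps p -> forall u, tangent a p u -> u != 0 ->
      exists w, tangent a p w /\ dform lam p u w != 0) /\
  (forall p, dXeps a eps p ->
      exists Y, tangent a p Y /\
        (forall w, tangent a p w -> dform lam p Y w = lam p w) /\
        0 < rdot p Y).

Definition Lcm (n : nat) (a : 'I_n.+1 -> nat) : nat := \big[lcmn/1%N]_(j < n.+1) a j.

(* action of zeta^m, zeta = exp(2 pi i / L): z_j |-> zeta^(m b_j) z_j, b_j = L / a_j *)
Definition CL_act (n : nat) (a : 'I_n.+1 -> nat) (m : nat) (p : Cn n) : Cn n :=
  let th j := (2 * pi * (m * (Lcm a %/ a j))%:R / (Lcm a)%:R : R) in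
  (\row_j (cos (th j) * p.1 ord0 j - sin (th j) * p.2 ord0 j),
   \row_j (sin (th j) * p.1 ord0 j + cos (th j) * p.2 ord0 j)).

Definition CL_invariant (n : nat) (a : 'I_n.+1 -> nat) (eps : R)
    (lam : oneform n) : Prop :=
  forall m p v, Xeps a eps p -> tangent a p v ->
    lam (CL_act a m p) (CL_act a m v) = lam p v.

Definition cj (n : nat) (a : 'I_n.+1 -> nat) (t : R) (j : 'I_n.+1) : R :=
  1 + t * ((a j)%:R - 1).

Definition phi (n : nat) (a : 'I_n.+1 -> nat) (t : R) (p : Cn n) : R :=
  8^-1 * \sum_(j < n.+1) cj a t j * (p.1 ord0 j ^+ 2 + p.2 ord0 j ^+ 2).

Definition dC (n : nat) (g : Cn n -> R) : oneform n :=
  fun p v => 'D_(mul_i v) g p.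

Definition lambda_a (n : nat) (a : 'I_n.+1 -> nat) : oneform n :=
  fun p v => @complex.Re R ((Complex 0 (8^-1)) *
    \sum_(k < n.+1) (a k)%:R * (zc p k * conjc (zc v k) - conjc (zc p k) * zc v k)).

Definition CL_liouville_homotopy (n : nat) (a : 'I_n.+1 -> nat) (eps : R)
    (lam0 lam1 : oneform n) : Prop :=
  exists Lam : R -> oneform n,
    (forall s p (c : R) u w, Lam s p (c *: u + w) = c * Lam s p u + Lam s p w) /\
    (forall v, smooth (fun q : R * Cn n => Lam q.1 q.2 v)) /\
    (forall s, 0 <= s <= 1 ->
       CL_invariant a eps (Lam s) /\ liouville_domain a eps (Lam s)) /\
    (forall p v, Xeps a eps p -> tangent a p v -> Lam 0 p v = lam0 p v) /\
    (forall p v, Xeps a eps p -> tangent a p v -> Lam 1 p v = lam1 p v).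

End Defs.

(* Main.v *)
Require Import Defs.
From HB Require Import structures.
From mathcomp Require Import all_boot all_order all_algebra.
From mathcomp Require Import all_classical all_reals all_analysis.
From mathcomp Require Import complex.
Import Order.TTheory GRing.Theory Num.Theory.

From mathcomp Require Import ring lra.

Module Aux.
Import numFieldNormedType.Exports.
Local Open Scope ring_scope.
Set Implicit Arguments. Unset Strict Implicit. Unset Printing Implicit Defensive.
Local Open Scope classical_set_scope.
Section S.
Variable R : realType.
Lemma derive_quad (V : normedModType R) (f : V -> R) (a v : V) (A B : R) :
  (forall h : R, f (h *: v + a) = f a + h * A + h ^+ 2 * B) ->
  'D_v f a = A.
Proof.
move=> hf; rewrite /derive.
have -> : (fun h : R => h^-1 *: ((f \o shift a) (h *: v) - f a)) =
   (fun h => if h == 0 then 0 else A + h * B).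
  apply/funext => h /=; rewrite hf.
  case: eqP => [->|/eqP h0]; first by rewrite invr0 scale0r.
  change (h^-1 * (f a + h * A + h ^+ 2 * B - f a) = A + h * B). by field.
apply: cvg_lim => //.
have H : (fun h : R => A + h * B) @ 0^' --> A + 0 * B.
  apply: cvg_within_filter.
  apply: cvgD; first exact: cvg_cst.
  exact: cvgMl cvg_id.
rewrite mul0r addr0 in H.
apply: cvg_trans H.
apply: near_eq_cvg. near=> h.
have : h != 0 by near: h; exact: (@nbhs_dnbhs_neq R 0).
by move/negbTE => ->.
Unshelve. all: end_near.
Qed.

Section E.
Variable V : normedModType R.

Inductive ex : Type :=
 | ECst of R | ELin of (V -> R) | EAdd of ex & ex | EMul of ex & ex.

Fixpoint ok (e : ex) : Prop :=
  match e with
  | ECst _ => True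
  | ELin l => (forall (h : R) v x, l (h *: v + x) = l x + h * l v) /\
              (forall x, differentiable l x)
  | EAdd e1 e2 => ok e1 /\ ok e2
  | EMul e1 e2 => ok e1 /\ ok e2
  end.

Fixpoint eval (e : ex) : V -> R :=
  match e with
  | ECst r => fun _ => r
  | ELin l => l
  | EAdd e1 e2 => fun x => eval e1 x + eval e2 x
  | EMul e1 e2 => fun x => eval e1 x * eval e2 x
  end.

Fixpoint dex (e : ex) (v : V) : ex :=
  match e with
  | ECst _ => ECst 0
  | ELin l => ECst (l v)
  | EAdd e1 e2 => EAdd (dex e1 v) (dex e2 v)
  | EMul e1 e2 => EAdd (EMul e1 (dex e2 v)) (EMul e2 (dex e1 v))
  end.

Lemma ok_dex e v : ok e -> ok (dex e v).
Proof.
elim: e => //= e1 IH1 e2 IH2 [h1 h2].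
  by split; [apply: IH1|apply: IH2].
by split; split => //; [apply: IH2|apply: IH1].
Qed.

Lemma diff_eval e : ok e -> forall x, differentiable (eval e) x.
Proof.
elim: e => /= [r _ x|l [_ hl] x|e1 IH1 e2 IH2 [h1 h2] x|e1 IH1 e2 IH2 [h1 h2] x].
- exact: differentiable_cst.
- exact: hl.
- exact: (differentiableD (IH1 h1 x) (IH2 h2 x)).
- exact: (differentiableM (IH1 h1 x) (IH2 h2 x)).
Qed.

Lemma der_eval e : ok e -> forall v x, 'D_v (eval e) x = eval (dex e v) x.
Proof.
elim: e => /= [r _ v x|l [hl _] v x|e1 IH1 e2 IH2 [h1 h2] v x|e1 IH1 e2 IH2 [h1 h2] v x].
- exact: derive_cst.
- apply: (derive_quad (f:=l) (a:=x) (v:=v) (A:=l v) (B:=0)) => h; rewrite hl; ring.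
- have d1 : derivable (eval e1) x v by apply: diff_derivable; exact: diff_eval.
  have d2 : derivable (eval e2) x v by apply: diff_derivable; exact: diff_eval.
  rewrite (deriveD d1 d2).
  by rewrite IH1 // IH2.
- have d1 : derivable (eval e1) x v by apply: diff_derivable; exact: diff_eval.
  have d2 : derivable (eval e2) x v by apply: diff_derivable; exact: diff_eval.
  rewrite (deriveM d1 d2).
  by rewrite IH1 // IH2.
Qed.

Lemma smooth_eval e : ok e -> smooth (eval e).
Proof.
move=> he vs.
suff [e' [he' ->]] : exists e', ok e' /\ Defs.iterD vs (eval e) = eval e'.
  by move=> x; apply: diff_eval.
elim: vs => [|v vs [e' [he' IH]]] /=; first by exists e.
exists (dex e' v); split; first exact: ok_dex.
by rewrite IH; apply/funext => x; apply: der_eval.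
Qed.


Definition pf (g : V -> R) := exists e, ok e /\ forall q, eval e q = g q.

Lemma smooth_pf g : pf g -> smooth g.
Proof.
move=> [e [he hg]]; have <- : eval e = g by apply/funext.
exact: smooth_eval.
Qed.

Lemma pf_cst r : pf (fun _ => r).
Proof. by exists (ECst r). Qed.

Lemma pf_lin l : (forall (h : R) v x, l (h *: v + x) = l x + h * l v) ->
  (forall x, differentiable l x) -> pf l.
Proof. by move=> h1 h2; exists (ELin l). Qed.

Lemma pf_add f g : pf f -> pf g -> pf (fun q => f q + g q).
Proof.
move=> [e1 [h1 E1]] [e2 [h2 E2]]; exists (EAdd e1 e2); split => //= q.
by rewrite E1 E2.
Qed.

Lemma pf_mul f g : pf f -> pf g -> pf (fun q => f q * g q).
Proof.
move=> [e1 [h1 E1]] [e2 [h2 E2]]; exists (EMul e1 e2); split => //= q.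
by rewrite E1 E2.
Qed.

Lemma pf_sub f g : pf f -> pf g -> pf (fun q => f q - g q).
Proof.
move=> hf hg.
have -> : (fun q => f q - g q) = (fun q => f q + (-1) * g q).
  by apply/funext => q; rewrite mulN1r.
by apply: pf_add => //; apply: pf_mul => //; apply: pf_cst.
Qed.

Lemma pf_sum (I : Type) (r : seq I) (P : pred I) (F : I -> V -> R) :
  (forall i, pf (F i)) -> pf (fun q => \sum_(i <- r | P i) F i q).
Proof.
move=> hF; elim: r => [|i r IH].
  have -> : (fun q => \sum_(i <- [::] | P i) F i q) = (fun _ => 0).
    by apply/funext => q; rewrite big_nil.
  exact: pf_cst.
case: (boolP (P i)) => Pi.
  have -> : (fun q => \sum_(j <- i :: r | P j) F j q) =
      (fun q => F i q + \sum_(j <- r | P j) F j q).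
    by apply/funext => q; rewrite big_cons Pi.
  exact: pf_add.
have -> : (fun q => \sum_(j <- i :: r | P j) F j q) =
    (fun q => \sum_(j <- r | P j) F j q).
  by apply/funext => q; rewrite big_cons (negbTE Pi).
exact: IH.
Qed.

Lemma pf_prod (I : Type) (r : seq I) (P : pred I) (F : I -> V -> R) :
  (forall i, pf (F i)) -> pf (fun q => \prod_(i <- r | P i) F i q).
Proof.
move=> hF; elim: r => [|i r IH].
  have -> : (fun q => \prod_(i <- [::] | P i) F i q) = (fun _ => 1).
    by apply/funext => q; rewrite big_nil.
  exact: pf_cst.
case: (boolP (P i)) => Pi.
  have -> : (fun q => \prod_(j <- i :: r | P j) F j q) =
      (fun q => F i q * \prod_(j <- r | P j) F j q).
    by apply/funext => q; rewrite big_cons Pi.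
  exact: pf_mul.
have -> : (fun q => \prod_(j <- i :: r | P j) F j q) =
    (fun q => \prod_(j <- r | P j) F j q).
  by apply/funext => q; rewrite big_cons (negbTE Pi).
exact: IH.
Qed.

End E.

Lemma diff_fst (U W : normedModType R) (x : U * W) : differentiable (@fst U W) x.
Proof.
have lin : linear (@fst U W) by [].
pose glM := GRing.isLinear.Build _ _ _ _ _ lin.
pose gL : {linear (U * W)%type -> U} := HB.pack (@fst U W) glM.
apply: (@linear_differentiable _ _ _ gL).
move=> y; exact: cvg_fst.
Qed.
Lemma diff_snd (U W : normedModType R) (x : U * W) : differentiable (@snd U W) x.
Proof.
have lin : linear (@snd U W) by [].
pose glM := GRing.isLinear.Build _ _ _ _ _ lin.
pose gL : {linear (U * W)%type -> W} := HB.pack (@snd U W) glM.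
apply: (@linear_differentiable _ _ _ gL).
move=> y; exact: cvg_snd.
Qed.
Lemma diff_c1 n (j : 'I_n.+1) (x : R * Cn R n) :
  differentiable (fun q : R * Cn R n => q.2.1 ord0 j) x.
Proof.
have -> : (fun q : R * Cn R n => q.2.1 ord0 j) =
  (fun M : 'rV[R]_n.+1 => M ord0 j) \o (@fst _ _) \o (@snd _ _) by [].
have h1 : differentiable ((@fst _ _) \o (@snd R (Cn R n))) x.
  exact: (differentiable_comp (diff_snd x) (diff_fst _)).
exact: (differentiable_comp h1 (differentiable_coord _ ord0 j)).
Qed.

Lemma diff_c2 n (j : 'I_n.+1) (x : R * Cn R n) :
  differentiable (fun q : R * Cn R n => q.2.2 ord0 j) x.
Proof.
have h1 : differentiable ((@snd _ _) \o (@snd R (Cn R n))) x.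
  exact: (differentiable_comp (diff_snd x) (diff_snd _)).
exact: (differentiable_comp h1 (differentiable_coord _ ord0 j)).
Qed.

Lemma pf_s n : pf (fun q : R * Cn R n => q.1).
Proof.
apply: pf_lin; last exact: diff_fst.
by move=> h v x /=; rewrite addrC.
Qed.

Lemma pf_x n j : pf (fun q : R * Cn R n => q.2.1 ord0 j).
Proof.
apply: pf_lin; last exact: diff_c1.
by move=> h v x /=; rewrite !mxE addrC.
Qed.

Lemma pf_y n j : pf (fun q : R * Cn R n => q.2.2 ord0 j).
Proof.
apply: pf_lin; last exact: diff_c2.
by move=> h v x /=; rewrite !mxE addrC.
Qed.

End S.

Local Open Scope complex_scope.
Local Open Scope ring_scope.
Local Notation Rp := (@complex.Re _).
Local Notation Ip := (@complex.Im _).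
Section C.
Variable R : realType.
Implicit Types x y w : R[i].
Lemma ReM x y : Rp (x * y) = Rp x * Rp y - Ip x * Ip y.
Proof. by case: x => a b; case: y => c d. Qed.
Lemma ImM x y : Ip (x * y) = Rp x * Ip y + Ip x * Rp y.
Proof. by case: x => a b; case: y => c d. Qed.
Lemma ReD x y : Rp (x + y) = Rp x + Rp y. Proof. by case: x => a b; case: y => c d. Qed.
Lemma ImD x y : Ip (x + y) = Ip x + Ip y. Proof. by case: x => a b; case: y => c d. Qed.
Lemma ReN x : Rp (- x) = - Rp x. Proof. by case: x => a b. Qed.
Lemma ImN x : Ip (- x) = - Ip x. Proof. by case: x => a b. Qed.
Lemma ReB x y : Rp (x - y) = Rp x - Rp y. Proof. by rewrite ReD ReN. Qed.
Lemma ImB x y : Ip (x - y) = Ip x - Ip y. Proof. by rewrite ImD ImN. Qed.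
Lemma ReJ x : Rp (conjc x) = Rp x. Proof. by case: x => a b. Qed.
Lemma ImJ x : Ip (conjc x) = - Ip x. Proof. by case: x => a b. Qed.
Lemma ReC (r : R) : Rp (r%:C) = r. Proof. by []. Qed.
Lemma ImC (r : R) : Ip (r%:C) = 0. Proof. by []. Qed.
Lemma natC k : (k%:R : R[i]) = (k%:R : R)%:C.
Proof. by rewrite rmorph_nat. Qed.
Lemma Re_sum (I : Type) (r : seq I) (P : pred I) (F : I -> R[i]) :
  Rp (\sum_(i <- r | P i) F i) = \sum_(i <- r | P i) Rp (F i).
Proof. by apply: (big_morph (@complex.Re R)) => //; exact: ReD. Qed.
Lemma Im_sum (I : Type) (r : seq I) (P : pred I) (F : I -> R[i]) :
  Ip (\sum_(i <- r | P i) F i) = \sum_(i <- r | P i) Ip (F i).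
Proof. by apply: (big_morph (@complex.Im R)) => //; exact: ImD. Qed.
Definition n2 x : R := Rp x ^+ 2 + Ip x ^+ 2.
Lemma n2_ge0 x : 0 <= n2 x. Proof. rewrite /n2; nra. Qed.
Lemma n2M x y : n2 (x * y) = n2 x * n2 y.
Proof. rewrite /n2 ReM ImM; ring. Qed.
Lemma n2X x k : n2 (x ^+ k) = n2 x ^+ k.
Proof. elim: k => [|k IH]; first by rewrite !expr0 /n2 /=; ring.
by rewrite !exprS n2M IH. Qed.
Lemma n2J x : n2 (conjc x) = n2 x. Proof. by rewrite /n2 ReJ ImJ sqrrN. Qed.
Lemma n2C (r : R) : n2 (r%:C) = r ^+ 2. Proof. by rewrite /n2 /=; ring. Qed.
Lemma n2_eq0 x : n2 x = 0 -> x = 0.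
Proof. case: x => a b; rewrite /n2 /= => h.
have ha : a = 0 by nra. have hb : b = 0 by nra. by rewrite ha hb. Qed.
Lemma mulJ x : x * conjc x = (n2 x)%:C.
Proof. case: x => a b; rewrite /n2 /=; apply/eqP; rewrite eq_complex /=; apply/andP; split; apply/eqP; ring. Qed.
Lemma JM x y : conjc (x * y) = conjc x * conjc y. Proof. exact: rmorphM. Qed.
Lemma ReJx_le x : Rp x ^+ 2 <= n2 x. Proof. rewrite /n2; nra. Qed.

Lemma term_id (b g zz ww : R[i]) (c : R) : c != 0 ->
  c * (2 * (Rp (zz * (2^-1)%:C + b * conjc g * (c^-1)%:C) * Ip ww -
            Ip (zz * (2^-1)%:C + b * conjc g * (c^-1)%:C) * Rp ww)
       - (Rp zz * Ip ww - Ip zz * Rp ww))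
  = 2 * Ip (conjc b * (g * ww)).
Proof.
move=> hc; case: b => b1 b2; case: g => g1 g2; case: zz => z1 z2; case: ww => w1 w2.
rewrite !(ReM, ImM, ReD, ImD, ReJ, ImJ) /=; by field.
Qed.
Lemma rdot_term (x y : R) (Y : R[i]) :
  x * Rp Y + y * Ip Y = Rp (conjc (Complex x y) * Y).
Proof. by rewrite ReM ReJ ImJ /=; ring. Qed.
Lemma n2_sub_id (g s zz : R[i]) :
  n2 (g - s * conjc zz) = n2 g - 2 * Rp (conjc s * (g * zz)) + n2 s * n2 zz.
Proof.
case: g => g1 g2; case: s => s1 s2; case: zz => z1 z2.
rewrite /n2 !(ReM, ImM, ReB, ImB, ReJ, ImJ) /=; ring.
Qed.
Lemma ReMC (x : R[i]) (r : R) : Rp (x * r%:C) = Rp x * r.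
Proof. by rewrite ReM /=; ring. Qed.
Lemma ImMC (x : R[i]) (r : R) : Ip (x * r%:C) = Ip x * r.
Proof. by rewrite ImM /=; ring. Qed.
Lemma Rp_mulJ (x : R[i]) : Rp (x * conjc x) = n2 x.
Proof. by rewrite mulJ. Qed.
Lemma Rp_Jmul (x : R[i]) : Rp (conjc x * x) = n2 x.
Proof. by rewrite mulrC mulJ. Qed.
Lemma psum_gt0 (I : finType) (F : I -> R) (j : I) :
  (forall i, 0 <= F i) -> 0 < F j -> 0 < \sum_i F i.
Proof.
move=> h0 hj; rewrite (bigD1 j) //=.
have : 0 <= \sum_(i | i != j) F i by apply: sumr_ge0 => i _.
lra.
Qed.
Lemma sum_ge_term (I : finType) (F : I -> R) (j : I) :
  (forall i, 0 <= F i) -> F j <= \sum_i F i.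
Proof.
move=> h0; rewrite (bigD1 j) //=.
have : 0 <= \sum_(i | i != j) F i by apply: sumr_ge0 => i _.
lra.
Qed.

Lemma G1 (S0 v : R[i]) (r : R) : Rp (S0 * conjc (r%:C * v)) = r * Rp (S0 * conjc v).
Proof. case: S0 => s1 s2; case: v => v1 v2; rewrite !(ReM, ImM, ReJ, ImJ) /=; ring. Qed.
Lemma G2 (S0 : R[i]) (r : R) : Rp (S0 * conjc (r%:C)) = r * Rp S0.
Proof. case: S0 => s1 s2; rewrite !(ReM, ImM, ReJ, ImJ) /=; ring. Qed.
Lemma rd_id (zz g S0 : R[i]) (H c : R) : c != 0 -> H != 0 ->
  Rp (conjc zz * (zz * (2^-1)%:C + (- S0 * ((2 * H)^-1)%:C) * conjc g * (c^-1)%:C))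
  = n2 zz * 2^-1 - (2 * H)^-1 * Rp (S0 * conjc (zz * g)) / c.
Proof.
move=> hc hH; case: zz => z1 z2; case: g => g1 g2; case: S0 => s1 s2.
rewrite /n2 !(ReM, ImM, ReD, ImD, ReN, ImN, ReJ, ImJ) /=. by field; rewrite hc hH.
Qed.
Lemma CM (x y : R) : (x * y)%:C = x%:C * y%:C :> R[i].
Proof. by apply/eqP; rewrite eq_complex /= !mulr0 !mul0r subr0 addr0 !eqxx. Qed.
Lemma YG (g zz b : R[i]) (h ci : R) :
  g * (zz * h%:C + b * conjc g * ci%:C) = g * zz * h%:C + b * (n2 g * ci)%:C.
Proof.
have -> : g * (zz * h%:C + b * conjc g * ci%:C) = g * zz * h%:C + b * (g * conjc g) * ci%:C.
  by ring.
by rewrite mulJ CM mulrA.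
Qed.
End C.

Section Main.
Variable R : realType.
Variable n : nat.
Variable a : 'I_n.+1 -> nat.
Hypothesis ha : forall j, (1 < a j)%N.

Definition mk (k : 'I_n.+1) (s : R) : R := (1 - s) * (a k)%:R + s.
Definition Pa : R := \prod_(k < n.+1) (a k)%:R.
Definition rr (s : R) : R := (1 - s) * Pa^-1 + s.
Definition cc (j : 'I_n.+1) (s : R) : R :=
  (a j)%:R * rr s * \prod_(k < n.+1 | k != j) mk k s.
Definition Lam (s : R) : oneform R n := fun p v =>
  4^-1 * \sum_(j < n.+1) cc j s * (p.1 ord0 j * v.2 ord0 j - p.2 ord0 j * v.1 ord0 j).

Lemma a_ge2 j : 2 <= (a j)%:R :> R.
Proof. by rewrite (ler_nat R 2); exact: ha. Qed.
Lemma a_gt0 j : 0 < (a j)%:R :> R.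
Proof. by have := a_ge2 j; lra. Qed.
Lemma Pa_gt0 : 0 < Pa.
Proof. by apply: prodr_gt0 => k _; exact: a_gt0. Qed.
Lemma mk_gt0 k s : 0 <= s <= 1 -> 0 < mk k s.
Proof. move=> /andP[h0 h1]; have := a_ge2 k; rewrite /mk; nra. Qed.
Lemma rr_gt0 s : 0 <= s <= 1 -> 0 < rr s.
Proof.
move=> /andP[h0 h1]; have := Pa_gt0; rewrite /rr => hP.
have hP' : 0 < Pa^-1 by rewrite invr_gt0.
nra.
Qed.
Lemma cc_gt0 j s : 0 <= s <= 1 -> 0 < cc j s.
Proof.
move=> hs; rewrite /cc; apply: mulr_gt0; first apply: mulr_gt0.
- exact: a_gt0.
- exact: rr_gt0.
- by apply: prodr_gt0 => k _; exact: mk_gt0.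
Qed.
Lemma cc0 j : cc j 0 = 1.
Proof.
rewrite /cc /rr /mk.
have -> : \prod_(k < n.+1 | k != j) ((1 - 0) * (a k)%:R + 0 : R) =
          \prod_(k < n.+1 | k != j) (a k)%:R.
  by apply: eq_bigr => k _; rewrite subr0 mul1r addr0.
have hP : Pa = (a j)%:R * \prod_(k < n.+1 | k != j) (a k)%:R.
  by rewrite /Pa (bigD1 j).
rewrite subr0 mul1r addr0 mulrAC -hP mulfV //.
by have := Pa_gt0; rewrite lt0r => /andP[].
Qed.
Lemma cc1 j : cc j 1 = (a j)%:R.
Proof.
rewrite /cc /rr /mk big1 ?subrr ?mul0r ?add0r ?mulr1 // => k _.
ring.
Qed.

Lemma Lam_lin s p (c : R) u w : Lam s p (c *: u + w) = c * Lam s p u + Lam s p w.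
Proof.
rewrite /Lam mulrA (mulrC c) -mulrA -mulrDr; congr (_ * _).
rewrite mulr_sumr -big_split /=; apply: eq_bigr => j _; rewrite !mxE; ring.
Qed.

Lemma Lam_linl s p (h : R) u w : Lam s (h *: u + p) w = Lam s p w + h * Lam s u w.
Proof.
rewrite /Lam mulrA (mulrC h) -mulrA -mulrDr; congr (_ * _).
rewrite mulr_sumr -big_split /=; apply: eq_bigr => j _; rewrite !mxE; ring.
Qed.

Lemma D_Lam s p u w : 'D_u (fun q => Lam s q w) p = Lam s u w.
Proof.
apply: (derive_quad (B := 0)) => h; rewrite Lam_linl; ring.
Qed.


Lemma Lam_smooth v : smooth (fun q : R * Cn R n => Lam q.1 q.2 v).
Proof.
apply: smooth_pf; rewrite /Lam.
apply: pf_mul; first exact: pf_cst.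
apply: pf_sum => j; apply: pf_mul.
  rewrite /cc; apply: pf_mul; first apply: pf_mul.
  - exact: pf_cst.
  - rewrite /rr; apply: pf_add; last exact: pf_s.
    by apply: pf_mul; [apply: pf_sub; [exact: pf_cst|exact: pf_s]|exact: pf_cst].
  - apply: pf_prod => k; rewrite /mk; apply: pf_add; last exact: pf_s.
    by apply: pf_mul; [apply: pf_sub; [exact: pf_cst|exact: pf_s]|exact: pf_cst].
by apply: pf_sub; apply: pf_mul; (exact: pf_x || exact: pf_y || exact: pf_cst).
Qed.

Lemma rot_inv (C S x y v1 v2 c : R) : C ^+ 2 + S ^+ 2 = 1 ->
  c * ((C * x - S * y) * (S * v1 + C * v2) - (S * x + C * y) * (C * v1 - S * v2))
  = c * (x * v2 - y * v1).
Proof.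
move=> h.
have -> : c * ((C * x - S * y) * (S * v1 + C * v2) - (S * x + C * y) * (C * v1 - S * v2))
  = c * (x * v2 - y * v1) * (C ^+ 2 + S ^+ 2) by ring.
by rewrite h mulr1.
Qed.

Lemma Lam_inv s eps : CL_invariant a eps (Lam s).
Proof.
move=> m p v _ _; rewrite /Lam /CL_act /=; congr (_ * _).
apply: eq_bigr => j _; rewrite !mxE.
by apply: rot_inv; exact: cos2Dsin2.
Qed.

Lemma Lam0 p v : Lam 0 p v = - dC (phi a 0) p v.
Proof.
rewrite /dC.
rewrite (@derive_quad _ _ (phi a 0) p (mul_i v)
   (4^-1 * \sum_(j < n.+1) (p.1 ord0 j * (mul_i v).1 ord0 j + p.2 ord0 j * (mul_i v).2 ord0 j))
   (phi a 0 (mul_i v))).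
  rewrite /Lam -mulrN -sumrN; congr (_ * _); apply: eq_bigr => j _.
  rewrite cc0 /mul_i /= !mxE; ring.
move=> h; rewrite /phi !mulr_sumr -!big_split /=; apply: eq_bigr => j _.
rewrite /cj /mul_i /= !mxE; by field.
Qed.

Lemma Lam1 p v : Lam 1 p v = lambda_a a p v.
Proof.
rewrite /lambda_a ReM Im_sum /= mul0r sub0r /Lam -mulNr.
rewrite !mulr_sumr; apply: eq_bigr => j _.
rewrite cc1 natC /zc !(ImM, ReM, ImB, ReB) /=; by field.
Qed.

Lemma dform_Lam s p u w : dform (Lam s) p u w = Lam s u w - Lam s w u.
Proof. by rewrite /dform !D_Lam. Qed.

Lemma zc_mul_i (u : Cn R n) k : zc (mul_i u) k = 'i%C * zc u k.
Proof.
rewrite /zc /mul_i /= mxE; apply/eqP; rewrite eq_complex /=.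
by apply/andP; split; apply/eqP; ring.
Qed.

Lemma nz_coord (u : Cn R n) : u != 0 ->
  exists j, (u.1 ord0 j != 0) || (u.2 ord0 j != 0).
Proof.
move=> hu; apply/not_existsP => hall; move/eqP: hu; apply.
case: u hall => u1 u2 hall.
have h1 : u1 = 0.
  apply/matrixP => i j; rewrite ord1 mxE.
  by move: (hall j); apply: contra_notP => /eqP ->.
have h2 : u2 = 0.
  apply/matrixP => i j; rewrite ord1 mxE.
  by move: (hall j); apply: contra_notP => /eqP ->; rewrite orbT.
by rewrite h1 h2.
Qed.

Lemma nondeg s p u : 0 <= s <= 1 -> tangent a p u -> u != 0 ->
  exists w, tangent a p w /\ dform (Lam s) p u w != 0.
Proof.
move=> hs ht hu; exists (mul_i u); split.
  rewrite /tangent.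
  under eq_bigr => k _ do rewrite zc_mul_i mulrCA.
  by rewrite -mulr_sumr ht mulr0.
rewrite dform_Lam /Lam -mulrBr -sumrB.
have [j hj] := nz_coord hu.
apply: lt0r_neq0; apply: mulr_gt0; first by [].
apply: (psum_gt0 (j := j)) => [i|].
  rewrite /mul_i /= !mxE.
  have := cc_gt0 i hs; nra.
rewrite /mul_i /= !mxE.
have hc := cc_gt0 j hs.
case/orP: hj => hj.
  have : 0 < u.1 ord0 j ^+ 2 by rewrite exprn_even_gt0.
  nra.
have : 0 < u.2 ord0 j ^+ 2 by rewrite exprn_even_gt0.
nra.
Qed.

Definition Mn : nat := (\sum_(j < n.+1) a j)%N.
Definition MM : R := Mn%:R.
Definition th : R := ((n.+1)%:R^-1) ^+ Mn.
Definition eps0 : R := th / MM ^+ 2.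

Lemma a_le_Mn j : (a j <= Mn)%N.
Proof. by rewrite /Mn (bigD1 j) //= leq_addr. Qed.
Lemma a_le_M j : (a j)%:R <= MM.
Proof. by rewrite /MM ler_nat a_le_Mn. Qed.
Lemma sum_a : \sum_(j < n.+1) (a j)%:R = MM :> R.
Proof. by rewrite /MM /Mn natr_sum. Qed.
Lemma M_ge2 : 2 <= MM.
Proof. by apply: le_trans (a_ge2 ord0) (a_le_M ord0). Qed.
Lemma inv_n_gt0 : 0 < (n.+1)%:R^-1 :> R.
Proof. by rewrite invr_gt0 ltr0n. Qed.
Lemma inv_n_le1 : (n.+1)%:R^-1 <= 1 :> R.
Proof. by rewrite invf_le1 ?ler1n ?ltr0n. Qed.
Lemma th_gt0 : 0 < th.
Proof. by rewrite /th exprn_gt0 //; exact: inv_n_gt0. Qed.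
Lemma th_le1 : th <= 1.
Proof. by rewrite /th exprn_ile1 // ?inv_n_le1 // ltW // inv_n_gt0. Qed.
Lemma eps0_gt0 : 0 < eps0.
Proof.
rewrite /eps0 divr_gt0 ?th_gt0 // exprn_gt0 //.
by have := M_ge2; lra.
Qed.
Lemma pow_bound k x : (k <= Mn)%N -> (n.+1)%:R^-1 <= x -> th <= x ^+ k.
Proof.
move=> hk hx.
apply: (@le_trans _ _ (((n.+1)%:R^-1) ^+ k)).
  by rewrite /th ler_wiXn2l // ?inv_n_le1 // ltW // inv_n_gt0.
have h0 := inv_n_gt0.
by rewrite lerXn2r // nnegrE ltW // (lt_le_trans h0 hx).
Qed.
Lemma th_le_pow k x : (k <= Mn)%N -> (n.+1)%:R^-1 <= x -> x <= 1 -> th <= x ^+ k.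
Proof. by move=> hk hx _; exact: pow_bound. Qed.

Section Bdry.
Variables (eps : R) (p : Cn R n).
Hypothesis heps : 0 < eps.
Hypothesis heps0 : eps < eps0.
Hypothesis hp : dXeps a eps p.

Let z j := zc p j.
Let G j := (a j)%:R * z j ^+ (a j).-1.
Let q j := n2 (z j).
Let u j := z j ^+ a j.
Let S := \sum_(j < n.+1) G j * z j.

Lemma hq : \sum_(j < n.+1) q j = 1.
Proof.
case: hp => _ <-; rewrite /rdot; apply: eq_bigr => j _.
by rewrite /q /z /n2 /zc /= !expr2.
Qed.
Lemma hsu : \sum_(j < n.+1) u j = eps%:C.
Proof. by case: hp. Qed.
Lemma q_ge0 j : 0 <= q j. Proof. exact: n2_ge0. Qed.
Lemma q_le1 j : q j <= 1.
Proof. by rewrite -hq; apply: (sum_ge_term (F := q)) => i; exact: q_ge0. Qed.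
Lemma j0_ex : exists j, (n.+1)%:R^-1 <= q j.
Proof.
apply/not_existsP => hall.
have : \sum_(j < n.+1) q j < \sum_(j < n.+1) (n.+1)%:R^-1.
  apply: ltr_sum; first by apply/hasP; exists ord0; rewrite ?mem_index_enum.
  by move=> i _; rewrite ltNge; apply/negP => h; exact: (hall i h).
rewrite hq sumr_const card_ord -[_ *+ n.+1]mulr_natr mulVf ?pnatr_eq0 //; lra.
Qed.
Lemma hGz j : G j * z j = (a j)%:R * u j.
Proof.
rewrite /G /u -mulrA -exprSr prednK //.
by apply: ltn_trans (ha j).
Qed.
Lemma n2G j : n2 (G j) = (a j)%:R ^+ 2 * q j ^+ (a j).-1.
Proof. by rewrite /G n2M natC n2C n2X. Qed.
Lemma Re_u_le1 j : Rp (u j) <= 1.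
Proof.
have h1 : n2 (u j) <= 1 by rewrite /u n2X exprn_ile1 // ?q_ge0 ?q_le1.
have := ReJx_le (u j); nra.
Qed.
Lemma ReS_le : Rp S <= MM.
Proof.
rewrite /S Re_sum -sum_a; apply: ler_sum => j _.
rewrite hGz natC mulrC ReMC.
have := Re_u_le1 j; have := a_gt0 j; nra.
Qed.


Lemma eps_lt1 : eps < 1.
Proof.
have h1 := th_le1; have h2 := M_ge2; have h3 := th_gt0.
have : eps0 <= 1.
  rewrite /eps0 ler_pdivrMr ?exprn_gt0 //; last by lra.
  nra.
move=> h4; exact: lt_le_trans heps0 h4.
Qed.

Lemma epsM_lt_th : eps * MM < th.
Proof.
have hM := M_ge2; have ht := th_gt0.
have e : eps0 * MM = th / MM by rewrite /eps0; field; lra.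
have h1 : eps * MM < eps0 * MM by rewrite ltr_pM2r //; lra.
have h2 : th / MM <= th.
  rewrite ler_pdivrMr; last by lra.
  nra.
lra.
Qed.

Lemma B_pos : 0 < \sum_(j < n.+1) n2 (G j) / (a j)%:R - eps * Rp S.
Proof.
have [j0 hj0] := j0_ex.
have h1 : th <= \sum_(j < n.+1) n2 (G j) / (a j)%:R.
  apply: le_trans (sum_ge_term (F := fun j => n2 (G j) / (a j)%:R) j0 _); last first.
    by move=> i; apply: divr_ge0; [exact: n2_ge0|exact: ltW (a_gt0 i)].
  rewrite n2G.
  have hk : ((a j0).-1 <= Mn)%N by apply: leq_trans (leq_pred _) (a_le_Mn j0).
  have hQ := pow_bound hk hj0.
  have ha2 := a_ge2 j0.
  have -> : (a j0)%:R ^+ 2 * q j0 ^+ (a j0).-1 / (a j0)%:R =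
            (a j0)%:R * q j0 ^+ (a j0).-1 by field; lra.
  have := th_gt0; nra.
have h2 : eps * Rp S <= eps * MM by rewrite ler_wpM2l // ?ReS_le // ltW.
have h3 := epsM_lt_th.
lra.
Qed.

Lemma A_id : \sum_(j < n.+1) n2 (G j - S * conjc (z j)) =
             \sum_(j < n.+1) n2 (G j) - n2 S.
Proof.
under eq_bigr do rewrite n2_sub_id.
rewrite big_split /= sumrB -!mulr_sumr -Re_sum -mulr_sumr.
rewrite -/S Rp_Jmul.
have -> : \sum_(i < n.+1) n2 (z i) = 1 by exact: hq.
ring.
Qed.

Lemma A_pos : 0 < \sum_(j < n.+1) n2 (G j) - n2 S.
Proof.
rewrite -A_id.
have hge : 0 <= \sum_(j < n.+1) n2 (G j - S * conjc (z j)).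
  by apply: sumr_ge0 => j _; exact: n2_ge0.
rewrite lt_neqAle hge andbT; apply/eqP => h0.
have hG : forall j, G j = S * conjc (z j).
  move=> j; apply/eqP; rewrite -subr_eq0; apply/eqP; apply: n2_eq0.
  by apply: (psumr_eq0P (fun i _ => n2_ge0 _) (esym h0)).
have [j0 hj0] := j0_ex.
have hq0 : 0 < q j0 by apply: lt_le_trans hj0; exact: inv_n_gt0.
have ha0 := a_ge2 j0.
have hk : (a j0).-1 = ((a j0).-2).+1.
  by case: (a j0) (ha j0) => [|[|k]].
have nS : n2 S = (a j0)%:R ^+ 2 * q j0 ^+ (a j0).-2.
  have e1 := n2G j0.
  rewrite hG n2M n2J hk exprS in e1.
  apply: (mulIf (lt0r_neq0 hq0)).
  rewrite e1 -/(q j0) [q j0 ^+ _]exprS; ring.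
have hkM : ((a j0).-2 <= Mn)%N.
  by apply: leq_trans (a_le_Mn j0); rewrite -!subn1 -subnDA leq_subr.
have hS : th <= n2 S.
  rewrite nS; have hQ := pow_bound hkM hj0; have ht := th_gt0.
  have hA : 1 <= (a j0)%:R ^+ 2 :> R by rewrite expr2; nra.
  move: hQ hA; set Q := q j0 ^+ _; set A2 := _ ^+ 2; move=> hQ hA; nra.
have hu : forall j, u j = S * (q j / (a j)%:R)%:C.
  move=> j; have e : (a j)%:R * u j = S * (q j)%:C.
    by rewrite -hGz hG -mulrA [conjc _ * _]mulrC mulJ.
  have hanz : ((a j)%:R : R[i]) != 0 by rewrite pnatr_eq0 -lt0n (ltn_trans _ (ha j)).
  apply: (mulfI hanz); rewrite e natC !rmorphM /= rmorphV ?unitfE ?pnatr_eq0 -?lt0n ?(ltn_trans _ (ha j)) //.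
  rewrite -natC; field; done.
set rho := \sum_(j < n.+1) q j / (a j)%:R.
have heq : eps%:C = S * rho%:C.
  rewrite -hsu (eq_bigr _ (fun j _ => hu j)) -mulr_sumr.
  by rewrite -rmorph_sum.
have hn : eps ^+ 2 = n2 S * rho ^+ 2.
  by rewrite -n2C heq n2M n2C.
have hM := M_ge2.
have hrho : MM^-1 <= rho.
  have -> : MM^-1 = \sum_(j < n.+1) q j / MM by rewrite -mulr_suml hq mul1r.
  apply: ler_sum => j _; apply: ler_wpM2l; first exact: q_ge0.
  rewrite lef_pV2 ?posrE ?a_le_M ?a_gt0 //; lra.
have hMi : 0 < MM^-1 by rewrite invr_gt0; lra.
have hlow : eps0 <= eps ^+ 2.
  rewrite hn /eps0.
  have h1 : MM^-2 <= rho ^+ 2 by rewrite -exprVn lerXn2r ?nnegrE ?(ltW hMi) ?(le_trans (ltW hMi) hrho).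
  have h2 := th_gt0.
  apply: ler_pM => //; [exact: ltW | rewrite -exprVn; apply: exprn_ge0; exact: ltW].
have h1 := eps_lt1.
have : eps ^+ 2 < eps0.
  apply: le_lt_trans heps0; rewrite expr2 ger_pMl //; exact: ltW.
by rewrite ltNge hlow.
Qed.

Lemma Gj0_pos : exists j, 0 < n2 (G j).
Proof.
have [j0 hj0] := j0_ex; exists j0.
have hq0 : 0 < q j0 by apply: lt_le_trans hj0; exact: inv_n_gt0.
rewrite n2G; apply: mulr_gt0; first by rewrite exprn_gt0 // a_gt0.
exact: exprn_gt0.
Qed.

Lemma cc_eq s j : 0 <= s <= 1 ->
  cc j s = (rr s * \prod_(k < n.+1) mk k s) * (a j)%:R / mk j s.
Proof.
move=> hs; rewrite /cc [in RHS](bigD1 j) //=.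
have := mk_gt0 j hs; move=> hm.
by field; rewrite lt0r_neq0.
Qed.

Lemma liouY s : 0 <= s <= 1 -> exists Y, tangent a p Y /\
  (forall w, tangent a p w -> dform (Lam s) p Y w = Lam s p w) /\ 0 < rdot p Y.
Proof.
move=> hs.
set c := fun j => cc j s.
have hc0 : forall j, c j != 0 by move=> j; rewrite lt0r_neq0 // cc_gt0.
set H := \sum_(j < n.+1) n2 (G j) / c j.
have hH : 0 < H.
  have [j0 hj0] := Gj0_pos.
  apply: (psum_gt0 (j := j0)) => [i|]; apply: divr_ge0 || apply: divr_gt0 => //.
  - exact: n2_ge0.
  - by apply: ltW; apply: cc_gt0.
  - by apply: cc_gt0.
set b := - S * ((2 * H)^-1)%:C.
set Yc := fun j => z j * (2^-1)%:C + b * conjc (G j) * ((c j)^-1)%:C.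
pose Y : Cn R n := (\row_j Rp (Yc j), \row_j Ip (Yc j)).
have hY : forall j, zc Y j = Yc j.
  by move=> j; rewrite /zc /Y /= !mxE; case: (Yc j).
exists Y; split; [|split].
-
  rewrite /tangent.
  have -> : \sum_(k < n.+1) (a k)%:R * zc p k ^+ (a k).-1 * zc Y k =
            \sum_(k < n.+1) (G k * z k * (2^-1)%:C + b * (n2 (G k) * (c k)^-1)%:C).
    by apply: eq_bigr => k _; rewrite hY /Yc YG.
  rewrite big_split /= -mulr_suml -mulr_sumr -rmorph_sum -/S.
  rewrite /b -mulrA -CM.
  have -> : (2 * H)^-1 * \sum_(i < n.+1) n2 (G i) * (c i)^-1 = 2^-1.
    rewrite -/H; field; rewrite lt0r_neq0 //.
  by rewrite mulNr subrr.
-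
  move=> w hw; rewrite dform_Lam.
  apply/eqP; rewrite -subr_eq0 /Lam -!mulrBr -!sumrB.
  have -> : \sum_(i < n.+1) (cc i s * (Y.1 ord0 i * w.2 ord0 i - Y.2 ord0 i * w.1 ord0 i) -
       cc i s * (w.1 ord0 i * Y.2 ord0 i - w.2 ord0 i * Y.1 ord0 i) -
       cc i s * (p.1 ord0 i * w.2 ord0 i - p.2 ord0 i * w.1 ord0 i)) =
     \sum_(i < n.+1) 2 * Ip (conjc b * (G i * zc w i)).
    apply: eq_bigr => i _.
    rewrite -(term_id b (G i) (z i) (zc w i) (hc0 i)).
    rewrite /Y !mxE /c /zc /=; rewrite /Yc /c; ring.
  rewrite -mulr_sumr -Im_sum -mulr_sumr.
  have -> : \sum_(i < n.+1) G i * zc w i = 0 by exact: hw.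
  by rewrite mulr0 /= mulr0 mulr0.
-
  have hHn : H != 0 by rewrite lt0r_neq0.
  rewrite /rdot.
  have -> : \sum_(j < n.+1) (p.1 ord0 j * Y.1 ord0 j + p.2 ord0 j * Y.2 ord0 j) =
      \sum_(j < n.+1) (q j * 2^-1 - (2 * H)^-1 * (Rp (S * conjc (z j * G j)) / c j)).
    apply: eq_bigr => j _; rewrite /Y !mxE rdot_term.
    have -> : Complex (p.1 ord0 j) (p.2 ord0 j) = z j by [].
    rewrite /Yc /b (rd_id _ _ _ (hc0 j) hHn); rewrite /q; ring.
  set T := \sum_(j < n.+1) Rp (S * conjc (z j * G j)) / c j.
  rewrite sumrB -mulr_suml -mulr_sumr -/T.
  have -> : \sum_(j < n.+1) q j = 1 by exact: hq.
  rewrite mul1r.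
  have hR : forall j, Rp (S * conjc (z j * G j)) = (a j)%:R * Rp (S * conjc (u j)).
    by move=> j; rewrite [z j * _]mulrC hGz natC G1.
  have nS : n2 S = \sum_(j < n.+1) (a j)%:R * Rp (S * conjc (u j)).
    rewrite -Rp_mulJ.
    have -> : conjc S = \sum_(j < n.+1) conjc (((a j)%:R)%:C * u j).
      by rewrite /S rmorph_sum; apply: eq_bigr => j _; rewrite hGz natC.
    rewrite mulr_sumr Re_sum; apply: eq_bigr => j _; exact: G1.
  have eS : eps * Rp S = \sum_(j < n.+1) Rp (S * conjc (u j)).
    by rewrite -G2 -hsu rmorph_sum mulr_sumr Re_sum.
  set kap := rr s * \prod_(k < n.+1) mk k s.
  have hk : 0 < kap.
    by apply: mulr_gt0; [exact: rr_gt0 | apply: prodr_gt0 => k _; exact: mk_gt0].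
  have key : H - T = kap^-1 * ((1 - s) * (\sum_(j < n.+1) n2 (G j) - n2 S) +
                  s * (\sum_(j < n.+1) n2 (G j) / (a j)%:R - eps * Rp S)).
    rewrite nS eS /H /T -!sumrB !mulr_sumr -big_split mulr_sumr.
    apply: eq_bigr => j _; rewrite hR /c cc_eq // -/kap.
    have hm := mk_gt0 j hs; have haj := a_gt0 j.
    move: hm; rewrite /mk => hm.
    rewrite /=; by field; rewrite !lt0r_neq0.
  have hA := A_pos; have hB := B_pos.
  have hpos : 0 < (1 - s) * (\sum_(j < n.+1) n2 (G j) - n2 S) +
                  s * (\sum_(j < n.+1) n2 (G j) / (a j)%:R - eps * Rp S).
    move: hA hB; set A := _ - n2 S; set B := _ - eps * Rp S => hA hB.
    case/andP: hs => h0 h1; nra.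
  have hTH : T < H.
    have : 0 < H - T by rewrite key; apply: mulr_gt0 => //; rewrite invr_gt0.
    by rewrite subr_gt0.
  have e : (2 * H)^-1 * H = 2^-1 by field.
  have : (2 * H)^-1 * T < (2 * H)^-1 * H.
    by rewrite ltr_pM2l // invr_gt0 mulr_gt0.
  rewrite e subr_gt0; done.
Qed.
End Bdry.
End Main.

End Aux.
Import Aux.
Local Open Scope ring_scope.

Theorem proposition6p5 (R : realType) (n : nat) (a : 'I_n.+1 -> nat)
    (ha : forall j, (1 < a j)%N) :
  exists eps0 : R, 0 < eps0 /\
    forall eps : R, 0 < eps -> eps < eps0 ->
      CL_liouville_homotopy a eps
        (fun p v => - dC (phi a 0) p v) (lambda_a a).
Proof.
exists (@eps0 R n a); split; first exact: eps0_gt0.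
move=> eps he he0.
exists (@Lam R n a); split; [|split; [|split; [|split]]].
- by move=> s p c u w; exact: Lam_lin.
- by move=> v; exact: Lam_smooth.
- move=> s hs; split; first exact: Lam_inv.
  split; [|split].
  + move=> p hp; have [Y [hY [_ hr]]] := liouY ha he he0 hp hs.
    by exists Y; split => //; rewrite lt0r_neq0.
  + by move=> p _ u hu hu0; exact: nondeg.
  + by move=> p hp; exact: (@liouY R n a ha eps p he he0 hp s hs).
- by move=> p v _ _; exact: Lam0.
- by move=> p v _ _; exact: Lam1.
Qed.
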